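(* Assume the lifted model described in the context is well-posed and topologically detectable, with LDG $\mathcal{G}$ and topology $\mathcal{G}_T$. Let $i\ne j$. (1) If $i\in N_{\mathcal{G}_T}(j)$, $i\notin N_{\mathcal{G}_T}(j,2)$, and $\mathbf{B}_j'\Phi_X^{-1}(\omega)\mathbf{B}_i\succeq0$ for all $\omega\in[0,2\pi)$, then for all $\omega\in[0,2\pi)$ $$-\Phi_{E_j}^{-1}(\omega)\mathsf{H}_{ji}(\omega)-\mathsf{H}_{ij}(\omega)^*\Phi_{E_i}^{-1}(\omega)\succeq0.$$ (2) If $i\in N_{\mathcal{G}_T}(j)$, $i\in N_{\mathcal{G}_T}(j,2)$, and $\mathbf{B}_j'\Phi_X^{-1}(\omega)\mathbf{B}_i\succeq0$ for all $\omega\in[0,2\pi)$, then for all $\omega\in[0,2\pi)$ $$-\Phi_{E_j}^{-1}(\omega)\mathsf{H}_{ji}(\omega)-\mathsf{H}_{ij}(\omega)^*\Phi_{E_i}^{-1}(\omega)+\sum_{k\in\mathcal{C}_{\mathcal{G}}(j)\cap\mathcal{C}_{\mathcal{G}}(i)} b_{kj}b_{ki}\,G_k(\omega)^*\Phi_{E_k}^{-1}(\omega)G_k(\omega)\succeq0.$$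
   Context: Model: real $b_{ij}\ge0$ for $i\ne j$, $b_{ii}=0$; for each $i$ a stable scalar filter $g_i$ with $z$-transform $1/\mathsf{S}_i(z)$, $\mathsf{S}_i(z)=\sum_{n=1}^{l}a_{n,i}\big(\frac{2(1-z^{-1})}{\Delta t(1+z^{-1})}\big)^n+\sum_{j\ne i}b_{ij}$; $h_{ij}=b_{ij}g_i$. For a scalar filter $f$ its $T$-lifting is the $T\times T$ matrix filter with $(p,t)$ entry $a\mapsto f(aT+p-t)$, $p,t\in\{0,\dots,T-1\}$. Let $G_i$ be the $T$-lifting of $g_i$ and $H_{ij}=b_{ij}G_i$ the $T$-lifting of $h_{ij}$ (so $H_{ii}=\mathbf{0}$), with frequency responses $G_i(\omega)=\sum_a G_i[a]e^{-\mathrm{i}\omega a}$, $\mathsf{H}_{ij}(\omega)=b_{ij}G_i(\omega)$. The lifted processes $X_i$, $E_i$ ($T$-vector valued) satisfy $X_i(k)=\sum_j (H_{ij}*X_j)(k)+E_i(k)$; $E_1,\dots,E_m$ are jointly wide-sense stationary, zero-mean and mutually uncorrelated, with power spectral density matrices $\Phi_{E_i}(\omega)$. Stack $X=[X_1',\dots,X_m']'$, $E=[E_1',\dots,E_m']'$ and let $\mathbb{H}(\omega)$ be the $mT\times mT$ block matrix with $(i,j)$ block $\mathsf{H}_{ij}(\omega)$. Well-posed: $\mathbb{I}-\mathbb{H}(\omega)$ is invertible for almost every $\omega$ ($\Phi_X(\omega)$ denotes the power spectral density of $X=(\mathbb{I}-\mathbb{H})^{-1}E$). Topologically detectable: $\Phi_{E_j}(\omega)\succ0$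 for all $\omega$, $j$. $\mathbf{B}_j\in\mathbb{R}^{mT\times T}$ has $j$-th $T\times T$ block $I_T$ and other blocks zero. LDG $\mathcal{G}$: directed edge $i\to j$ iff $b_{ji}\ne0$; children $\mathcal{C}_{\mathcal{G}}(j)=\{k:b_{kj}\ne0\}$. Topology $\mathcal{G}_T$: undirected edge $\{i,j\}$ iff $b_{ij}\ne0$ or $b_{ji}\ne0$; $N_{\mathcal{G}_T}(j)$ = neighbors of $j$; $N_{\mathcal{G}_T}(j,2)=\{i:\exists k,\ \{j,k\},\{i,k\}\text{ edges of }\mathcal{G}_T\}$. $A\succeq0$ means $A$ is Hermitian positive semidefinite; $A^*$ is the conjugate transpose. *)

(* Defs.v *)
From HB Require Import structures.
From mathcomp Require Import all_boot all_order all_algebra.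
Set Implicit Arguments. Unset Strict Implicit. Unset Printing Implicit Defensive.
Import Order.TTheory GRing.Theory Num.Theory.
Local Open Scope ring_scope.

Section Defs.
Variable C : numClosedFieldType.

Definition ctr (p q : nat) (A : 'M[C]_(p, q)) : 'M[C]_(q, p) := map_mx Num.conj (A^T).

Definition psd (n : nat) (A : 'M[C]_n) : Prop :=
  ctr A = A /\ forall v : 'cV[C]_n, 0 <= (ctr v *m A *m v) 0 0.

Definition pd (n : nat) (A : 'M[C]_n) : Prop :=
  ctr A = A /\ forall v : 'cV[C]_n, v != 0 -> 0 < (ctr v *m A *m v) 0 0.

Variables (m T : nat).

Definition Hblk (b : 'I_m -> 'I_m -> C) (G : 'I_m -> 'M[C]_T) (i j : 'I_m) : 'M[C]_T :=
  b i j *: G i.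

Definition bigH (b : 'I_m -> 'I_m -> C) (G : 'I_m -> 'M[C]_T)
  : 'M[C]_(\sum_(i < m) T) := @mxblock C m m (fun _ => T) (fun _ => T) (fun i j => Hblk b G i j).

(* block-diagonal PSD of the stacked noise E (E_i mutually uncorrelated) *)
Definition PhiE_big (PhiE : 'I_m -> 'M[C]_T) : 'M[C]_(\sum_(i < m) T) :=
  @mxdiag C m (fun _ => T) PhiE.

(* PSD of X = (I - H)^{-1} E : Phi_X = (I-H)^{-1} Phi_E (I-H)^{-*} *)
Definition PhiX (b : 'I_m -> 'I_m -> C) (G : 'I_m -> 'M[C]_T) (PhiE : 'I_m -> 'M[C]_T)
  : 'M[C]_(\sum_(i < m) T) :=
  let R := invmx (1%:M - bigH b G) in R *m PhiE_big PhiE *m ctr R.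

Definition Bsel (j : 'I_m) : 'M[C]_(\sum_(i < m) T, T) :=
  @mxcol C m (fun _ => T) T (fun k => if k == j then (1%:M : 'M[C]_T) else 0).

(* topology G_T: undirected edge {i,j} iff b_ij <> 0 or b_ji <> 0 *)
Definition tedge (b : 'I_m -> 'I_m -> C) (i j : 'I_m) : Prop := b i j != 0 \/ b j i != 0.
Definition inN (b : 'I_m -> 'I_m -> C) (j i : 'I_m) : Prop := tedge b j i.
Definition inN2 (b : 'I_m -> 'I_m -> C) (j i : 'I_m) : Prop :=
  exists k, tedge b j k /\ tedge b i k.
Definition children (b : 'I_m -> 'I_m -> C) (j : 'I_m) : pred 'I_m := fun k => b k j != 0.

End Defs.
Arguments Bsel C {m T} j.

(* Main.v *)
Require Import Defs.
From HB Require Import structures.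
From mathcomp Require Import all_boot all_order all_algebra.
Import Order.TTheory GRing.Theory Num.Theory.
Set Implicit Arguments. Unset Strict Implicit. Unset Printing Implicit Defensive.
Local Open Scope ring_scope.

Section H.
Variable C : numClosedFieldType.

Lemma ctrM p q r (A : 'M[C]_(p, q)) (B : 'M[C]_(q, r)) : ctr (A *m B) = ctr B *m ctr A.
Proof. by rewrite /ctr trmx_mul map_mxM. Qed.

Lemma ctrK p q (A : 'M[C]_(p, q)) : ctr (ctr A) = A.
Proof. by apply/matrixP => s t; rewrite !mxE conjCK. Qed.

Lemma ctr1 n : ctr (1%:M : 'M[C]_n) = 1%:M.
Proof. by rewrite /ctr trmx1 map_mx1. Qed.

Lemma ctr0 p q : ctr (0 : 'M[C]_(p, q)) = 0.
Proof. by apply/matrixP => s t; rewrite !mxE rmorph0. Qed.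

Lemma ctrB p q (A B : 'M[C]_(p, q)) : ctr (A - B) = ctr A - ctr B.
Proof. by apply/matrixP => s t; rewrite !mxE rmorphB. Qed.

Lemma ctrZ p q (a : C) (A : 'M[C]_(p, q)) : ctr (a *: A) = a^* *: ctr A.
Proof. by apply/matrixP => s t; rewrite !mxE rmorphM. Qed.

Lemma inv_uniq n (A B : 'M[C]_n) : A *m B = 1%:M -> invmx A = B.
Proof.
move=> AB; have [uA _] := mulmx1_unit AB.
by rewrite -[invmx A]mulmx1 -AB mulmxA mulVmx // mul1mx.
Qed.

Lemma pd_unit n (A : 'M[C]_n) : pd A -> A \in unitmx.
Proof.
move=> [_ hA]; rewrite unitmxE unitfE; apply/negP => /det0P [v vn0 vA].
have u0 : ctr v != 0.
  by apply: contra vn0 => /eqP e; rewrite -(ctrK v) e ctr0.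
have := hA _ u0; rewrite ctrK vA mul0mx mxE ltxx //.
Qed.

Lemma ctr_unit n (A : 'M[C]_n) : A \in unitmx -> ctr A \in unitmx.
Proof. by move=> uA; rewrite /ctr map_unitmx unitmx_tr. Qed.


Section B.
Variables (m T : nat).
Notation N := (\sum_(k < m) T)%N.
Notation blk := (@mxblock C m m (fun _ => T) (fun _ => T)).
Notation dg := (@mxdiag C m (fun _ => T)).

Lemma sel_block (B_ : 'I_m -> 'I_m -> 'M[C]_T) j i :
  (Bsel C j)^T *m blk B_ *m Bsel C i = B_ j i.
Proof.
rewrite /Bsel tr_mxcol mul_mxrow_mxblock mul_mxrow_mxcol.
rewrite (bigD1 i) //= [X in _ + X]big1 ?addr0 => [|l]; last first.
  by move=> /negPf ->; rewrite mulmx0.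
rewrite eqxx mulmx1 (bigD1 j) //= big1 ?addr0 => [|k]; last first.
  by move=> /negPf ->; rewrite trmx0 mul0mx.
by rewrite eqxx trmx1 mul1mx.
Qed.

Lemma one_block : (1%:M : 'M[C]_N) = blk (fun k l => if k == l then 1%:M else 0).
Proof.
rewrite -(mxdiagZ (p_ := fun _ : 'I_m => T) (1 : C)) /mxdiag.
by apply: eq_mxblock => k l; rewrite conform_mx_id.
Qed.

Lemma mul_diag (A_ B_ : 'I_m -> 'M[C]_T) : dg A_ *m dg B_ = dg (fun k => A_ k *m B_ k).
Proof.
rewrite {2}/mxdiag mul_mxdiag_mxblock /mxdiag; apply: eq_mxblock => k l.
by case: eqP; rewrite ?conform_mx_id ?mulmx0.
Qed.

Lemma ctr_block (A_ : 'I_m -> 'I_m -> 'M[C]_T) : ctr (blk A_) = blk (fun k l => ctr (A_ l k)).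
Proof. by apply/matrixP => s t; rewrite !mxE. Qed.

Lemma diag_mul_block (D_ : 'I_m -> 'M[C]_T) (A_ : 'I_m -> 'I_m -> 'M[C]_T) :
  blk A_ *m dg D_ = blk (fun k l => A_ k l *m D_ l).
Proof. exact: mul_mxblock_mxdiag. Qed.

Lemma blk_mul (A_ B_ : 'I_m -> 'I_m -> 'M[C]_T) :
  blk A_ *m blk B_ = blk (fun k l => \sum_q A_ k q *m B_ q l).
Proof. exact: mul_mxblock. Qed.

End B.

Section K.
Variables (m T : nat).
Notation blk := (@mxblock C m m (fun _ => T) (fun _ => T)).
Notation dg := (@mxdiag C m (fun _ => T)).

Lemma key (b : 'I_m -> 'I_m -> C) (Gw Pw : 'I_m -> 'M[C]_T)
  (b_nonneg : forall i j, 0 <= b i j) (b_diag : forall i, b i i = 0)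
  (wp : (1%:M - bigH b Gw) \in unitmx) (pdP : forall k, pd (Pw k))
  (i j : 'I_m) (hij : i != j) :
  (Bsel C j)^T *m invmx (PhiX b Gw Pw) *m Bsel C i =
  - (invmx (Pw j) *m Hblk b Gw j i) - ctr (Hblk b Gw i j) *m invmx (Pw i)
  + \sum_(k < m) (b k j * b k i) *: (ctr (Gw k) *m invmx (Pw k) *m Gw k).
Proof.
pose A := fun k l : 'I_m => (if k == l then 1%:M else 0) - Hblk b Gw k l.
have EM : 1%:M - bigH b Gw = blk A by rewrite one_block /bigH -mxblockB.
have uD : PhiE_big Pw \in unitmx.
  apply: (proj1 (@mulmx1_unit _ _ _ (dg (fun k => invmx (Pw k))) _)).
  rewrite /PhiE_big mul_diag (eq_mxdiag (B'_ := fun _ => 1%:M)).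
    exact: mxdiagZ.
  by move=> k; rewrite mulmxV // pd_unit.
have EinvD : invmx (PhiE_big Pw) = dg (fun k => invmx (Pw k)).
  apply: inv_uniq; rewrite /PhiE_big mul_diag (eq_mxdiag (B'_ := fun _ => 1%:M)).
    exact: mxdiagZ.
  by move=> k; rewrite mulmxV // pd_unit.
have EX : invmx (PhiX b Gw Pw) = ctr (blk A) *m invmx (PhiE_big Pw) *m blk A.
  rewrite /PhiX -EM; apply: inv_uniq.
  set M := 1%:M - bigH b Gw.
  have e1 : ctr (invmx M) *m ctr M = 1%:M by rewrite -ctrM mulmxV // ctr1.
  rewrite -!mulmxA (mulmxA (ctr (invmx M))) e1 mul1mx (mulmxA (PhiE_big Pw)).
  by rewrite mulmxV // mul1mx mulVmx.
rewrite EX EinvD ctr_block diag_mul_block blk_mul sel_block.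
have term : forall q, (ctr (A q j) *m invmx (Pw q)) *m A q i =
  (if q == j then - (b j i *: (invmx (Pw j) *m Gw j)) else 0)
  + (if q == i then - (b i j *: (ctr (Gw i) *m invmx (Pw i))) else 0)
  + (b q j * b q i) *: (ctr (Gw q) *m invmx (Pw q) *m Gw q).
  move=> q; rewrite /A /Hblk.
  case: (eqVneq q j) => [->|qj].
    have ji : (j == i) = false by rewrite eq_sym (negbTE hij).
    rewrite ji b_diag scale0r subr0 ctr1 mul1mx mul0r scale0r !addr0 sub0r.
    by rewrite mulmxN -scalemxAr.
  rewrite ctrB ctr0 ctrZ geC0_conj //.
  case: (eqVneq q i) => [->|qi].
    rewrite b_diag scale0r subr0 mulmx1 mulr0 scale0r addr0 add0r sub0r.
    by rewrite mulNmx -scalemxAl.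
  rewrite !sub0r !add0r !mulNmx mulmxN opprK.
  by rewrite -!scalemxAl -scalemxAr scalerA.
rewrite (eq_bigr _ (fun q _ => term q)) !big_split /= -!big_mkcond !big_pred1_eq.
by rewrite /Hblk ctrZ geC0_conj // -scalemxAr -scalemxAl.
Qed.

End K.
End H.
Theorem theorem3p2
  (C : numClosedFieldType) (m T : nat) (Omega : Type)
  (b : 'I_m -> 'I_m -> C)
  (G : 'I_m -> Omega -> 'M[C]_T)          (* frequency responses G_k(w) of the T-liftings *)
  (PhiE : 'I_m -> Omega -> 'M[C]_T)       (* PSDs Phi_{E_k}(w) *)
  (b_nonneg : forall i j, 0 <= b i j)
  (b_diag : forall i, b i i = 0)
  (well_posed : forall w, (1%:M - bigH b (fun k => G k w)) \in unitmx)
  (detectable : forall j w, pd (PhiE j w))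
  (i j : 'I_m) (hij : i != j) :
  let H k l w := Hblk b (fun k => G k w) k l in
  let PhiXinv w := invmx (PhiX b (fun k => G k w) (fun k => PhiE k w)) in
  let core w := - (invmx (PhiE j w) *m H j i w) - ctr (H i j w) *m invmx (PhiE i w) in
  ((inN b j i -> ~ inN2 b j i ->
    (forall w, psd ((Bsel C j)^T *m PhiXinv w *m Bsel C i)) ->
    forall w, psd (core w))
  /\
   (inN b j i -> inN2 b j i ->
    (forall w, psd ((Bsel C j)^T *m PhiXinv w *m Bsel C i)) ->
    forall w, psd (core w +
       \sum_(k < m | (k \in children b j) && (k \in children b i))
          (b k j * b k i) *: (ctr (G k w) *m invmx (PhiE k w) *m G k w)))).
Proof.
move=> H PhiXinv core.
have E w : (Bsel C j)^T *m PhiXinv w *m Bsel C i = core w +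
  \sum_(k < m) (b k j * b k i) *: (ctr (G k w) *m invmx (PhiE k w) *m G k w).
  by rewrite /PhiXinv /core /H key // => k; apply: detectable.
split=> _ hN2 hB w; have := hB w; rewrite E.
  rewrite big1 ?addr0 // => k _.
  case: (eqVneq (b k j) 0) => [->|kj]; first by rewrite mul0r scale0r.
  case: (eqVneq (b k i) 0) => [->|ki]; first by rewrite mulr0 scale0r.
  by exfalso; apply: hN2; exists k; split; right.
congr psd; congr (_ + _).
rewrite [RHS]big_mkcond; apply: eq_bigr => k _.
rewrite /children !unfold_in /=.
case: (eqVneq (b k j) 0) => [->|kj]; first by rewrite mul0r scale0r.
case: (eqVneq (b k i) 0) => [->|ki]; first by rewrite mulr0 scale0r.
by [].
Qed.
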